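(* Let $\mathfrak E$ be an expectation of contributions with weights satisfying $c(k)=c(n-1-k)$ for all $k\in\{0,\dots,n-1\}$. Then for all $g\in\mathbb B(X)$ and $x\in X$, $$\mathfrak E_x(\omega_g)=\mathfrak E_x(\nu_{\overline g}).$$
   Context: $X$ is a fixed finite set of $n=|X|$ variables; $\mathbb B(X)$ is the set of Boolean functions $\{0,1\}^X\to\{0,1\}$, $\overline g$ denotes negation. For assignments $\mathbf u$ over $S$ and $\mathbf w$ over $X\setminus S$, $\mathbf u;\mathbf w$ is their concatenation. A cooperative game is $v:2^X\to\mathbb R$; $\partial_xv(S)=v(S\cup\{x\})-v(S\setminus\{x\})$. An expectation of contributions is a map $(x,v)\mapsto\mathfrak E_x(v)$ for which there are nonnegative weights $c(0),\dots,c(n-1)$ with $\sum_{S\subseteq X\setminus\{x\}}c(|S|)=1$ and $\mathfrak E_x(v)=\sum_{S\subseteq X\setminus\{x\}}c(|S|)\,\partial_xv(S)$. Dominating CGM: $\omega_f(S)=1$ if $\exists\mathbf u\in\{0,1\}^S\ \forall\mathbf w\in\{0,1\}^{X\setminus S}: f(\mathbf u;\mathbf w)=1$, else $0$. Rectifying CGM: $\nu_f(S)=1$ if $\forall\mathbf w\in\{0,1\}^{X\setminus S}\ \exists\mathbf u\in\{0,1\}^S: f(\mathbf u;\mathbf w)=1$, else $0$. *)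

(* Defs.v *)
From mathcomp Require Import all_boot all_order all_algebra.
Set Implicit Arguments. Unset Strict Implicit. Unset Printing Implicit Defensive.
Import Order.TTheory GRing.Theory Num.Theory.
Local Open Scope ring_scope.

(* Variables: a finite type X; n = #|X|.
   A total assignment is a : {ffun X -> bool}; a Boolean function is
   g : {ffun X -> bool} -> bool. *)

(* Concatenation u;w of an assignment u on S and w on X\S
   (only the values of u on S and of w off S matter). *)
Definition concat (X : finType) (S : {set X}) (u w : {ffun X -> bool})
  : {ffun X -> bool} := [ffun x => if x \in S then u x else w x].

Definition bneg (X : finType) (g : {ffun X -> bool} -> bool) :
  {ffun X -> bool} -> bool := fun a => ~~ g a.

Definition omega (R : numDomainType) (X : finType)
  (f : {ffun X -> bool} -> bool) (S : {set X}) : R :=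
  if [exists u : {ffun X -> bool}, forall w : {ffun X -> bool}, f (concat S u w)]
  then 1 else 0.

Definition nu (R : numDomainType) (X : finType)
  (f : {ffun X -> bool} -> bool) (S : {set X}) : R :=
  if [forall w : {ffun X -> bool}, exists u : {ffun X -> bool}, f (concat S u w)]
  then 1 else 0.

Definition contrib (R : numDomainType) (X : finType) (x : X)
  (v : {set X} -> R) (S : {set X}) : R := v (x |: S) - v (S :\ x).

Definition expectation_weights (R : numDomainType) (X : finType) (c : nat -> R) :=
  (forall k, (k < #|X|)%N -> 0 <= c k) /\
  (forall x : X, \sum_(S : {set X} | x \notin S) c #|S| = 1).

Definition expect (R : numDomainType) (X : finType) (c : nat -> R) (x : X)
  (v : {set X} -> R) : R :=
  \sum_(S : {set X} | x \notin S) c #|S| * contrib x v S.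

(* Main.v *)
Require Import Defs.
From mathcomp Require Import all_boot all_order all_algebra.
Import Order.TTheory GRing.Theory Num.Theory.
Local Open Scope ring_scope.

Lemma concatC (X : finType) (S : {set X}) u w :
  concat (~: S) u w = concat S w u.
Proof. by apply/ffunP => y; rewrite !ffunE inE; case: (y \in S). Qed.

Lemma dual (R : realFieldType) (X : finType) (g : {ffun X -> bool} -> bool) S :
  @nu R X (bneg g) (~: S) = 1 - @omega R X g S.
Proof.
rewrite /nu /omega.
have -> : [forall w, exists u, bneg g (concat (~: S) u w)] =
          ~~ [exists u, forall w, g (concat S u w)].
  rewrite negb_exists; apply/eq_forallb => w; rewrite negb_forall.
  by apply/eq_existsb => u; rewrite concatC.
by case: [exists u, _]; rewrite /= ?subrr ?subr0.
Qed.

Theorem mainTheorem14 (R : realFieldType) (X : finType) (c : nat -> R) :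
  @expectation_weights R X c ->
  (forall k, (k < #|X|)%N -> c k = c (#|X| - 1 - k)%N) ->
  forall (g : {ffun X -> bool} -> bool) (x : X),
    @expect R X c x (@omega R X g) = @expect R X c x (@nu R X (@bneg X g)).
Proof.
move=> _ Hc g x.
pose h (S : {set X}) := (~: S :\ x) :|: (S :&: [set x]).
have hK : involutive h.
  move=> S; apply/setP => y; rewrite /h !inE.
  by case: (y == x); case: (y \in S).
have hx : forall S, (x \in h S) = (x \in S).
  by move=> S; rewrite /h !inE eqxx; case: (x \in S).
rewrite /expect [RHS](reindex_inj (inv_inj hK)) /=.
under [RHS]eq_bigl => S do rewrite hx.
apply: eq_bigr => S xS.
have hS : h S = ~: (x |: S).
  apply/setP => y; rewrite /h !inE.
  case: (eqVneq y x) => [->|] /=; first by rewrite andbT (negbTE xS).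
  by move=> _; rewrite andbF orbF.
rewrite /contrib hS.
have -> : x |: ~: (x |: S) = ~: S.
  apply/setP => y; rewrite !inE.
  by case: (eqVneq y x) => [->|]; rewrite ?(negbTE xS) //.
have -> : ~: (x |: S) :\ x = ~: (x |: S).
  apply/setP => y; rewrite !inE.
  by case: (eqVneq y x) => [->|]; rewrite ?(negbTE xS) //.
rewrite !dual.
have -> : S :\ x = S.
  apply/setP => y; rewrite !inE.
  by case: (eqVneq y x) => [->|] //=; rewrite (negbTE xS).
have xX : (#|S| < #|X|)%N.
  rewrite -cardsT; apply: proper_card; apply/properP; split; [exact: subsetT | by exists x; rewrite ?inE].
rewrite [#|~: _|]cardsCs setCK cardsU1 xS add1n subnS -subn1 subnAC -Hc //.
congr (_ * _).
by rewrite opprB addrCA addrAC subrr add0r.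
Qed.
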